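(* Let $G$ be a connected graph with $|V(G)|\ge 3$ and $L(G)=2l(G)$, and let $V_1(G)$ be as in the context. Then: (1) for any maximum matchings $F_L,F_l$ of $G$ with $\nu(G\setminus F_L)=L(G)$ and $\nu(G\setminus F_l)=l(G)$, we have $(V(F_L)\setminus V(F_l))\cap V_1(G)=\emptyset$; (2) there exist a maximum matching $F_l$ of $G$ with $\nu(G\setminus F_l)=l(G)$ and a maximum matching $F_L$ of $G$ with $\nu(G\setminus F_L)=L(G)$ such that $V_1(G)\subseteq V(F_L\cap F_l)\cup (V(F_l)\setminus V(F_L))$.
   Context: Graphs are finite, undirected, without loops or multiple edges. $\nu(G)$ denotes the maximum size of a matching of $G$; a matching is maximum if it has $\nu(G)$ edges. For $F\subseteq E(G)$, $G\setminus F$ is the graph with vertex set $V(G)$ and edge set $E(G)\setminus F$, and $V(F)$ is the set of vertices incident to some edge of $F$. Define $L(G)=\max\{\nu(G\setminus F): F \text{ a maximum matching of } G\}$ and $l(G)=\min\{\nu(G\setminus F): F \text{ a maximum matching of } G\}$. A triangle is a cycle of length 3. Let $T$ be the set of triangles of $G$ containing at least two vertices of degree two (each vertex of degree two lies in at most one triangle of $T$). From each $t\in T$ choose one vertex $v_t$ of $t$ of degree two, and set $V_1(G)=\{v: \deg_G(v)=1\}\cup\{v_t: t\in T\}$. *)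

(* Defs.v *)
(* A finite simple graph on vertex set T (a finType) is given
   by its edge set E : {set {set T}}, every edge being a 2-element vertex set. *)
From mathcomp Require Import all_boot.
Set Implicit Arguments. Unset Strict Implicit. Unset Printing Implicit Defensive.

Section Graphs.
Variable T : finType.
Implicit Types (E F M : {set {set T}}) (v : T).

(* every edge has exactly two endpoints: no loops; sets give no multi-edges *)
Definition simple_graph E : bool := [forall f in E, #|f| == 2].

Definition adj E : rel T := fun x y => [set x; y] \in E.

Definition connected E : bool := [forall x, forall y, connect (adj E) x y].

Definition deg E v : nat := #|[set f in E | v \in f]|.

Definition Vof F : {set T} := cover F.

Definition matching E M : bool := (M \subset E) && trivIset M.

Definition nu E : nat := \max_(M in powerset E | trivIset M) #|M|.

Definition max_matching E M : bool := matching E M && (#|M| == nu E).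

Definition Lnu E : nat := \max_(F | max_matching E F) nu (E :\: F).

(* l(G) = min { nu(G \ F) : F maximum matching }; the set of maximum matchings
   is nonempty and every value is <= #|E|, so #|E| is a neutral start value *)
Definition lnu E : nat := \big[minn/#|E|]_(F | max_matching E F) nu (E :\: F).

Definition triangle E (t : {set T}) : bool :=
  (#|t| == 3) && [forall x in t, forall y in t, (x != y) ==> ([set x; y] \in E)].

Definition Tri2 E : {set {set T}} :=
  [set t | triangle E t && (2 <= #|[set v in t | deg E v == 2]|)].

(* V_1(G) relative to a choice function picking v_t in each t in Tri2 E *)
Definition V1 E (ch : {set T} -> T) : {set T} :=
  [set v | deg E v == 1] :|: [set ch t | t in Tri2 E].

Definition valid_choice E (ch : {set T} -> T) : Prop :=
  forall t, t \in Tri2 E -> (ch t \in t) /\ deg E (ch t) = 2.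

End Graphs.

(* Main.v *)
Require Import Defs.
From mathcomp Require Import all_boot.
From Stdlib Require Import Lia.
Set Implicit Arguments. Unset Strict Implicit. Unset Printing Implicit Defensive.

Section Basics.
Variable T : finType.
Implicit Types (A B e f g h : {set T}) (F M N X Y : {set {set T}}).

Lemma disjP A B : reflect (forall z, z \in A -> z \in B -> False) [disjoint A & B].
Proof.
rewrite -setI_eq0; apply: (iffP eqP) => [H z zA zB|H].
  have zI : z \in A :&: B by rewrite inE zA zB.
  by rewrite H inE in zI.
by apply/setP => z; rewrite !inE; apply/negP => /andP[]; exact: H.
Qed.

Lemma inVofP F x : reflect (exists2 e, e \in F & x \in e) (x \in Vof F).
Proof. exact: bigcupP. Qed.

Lemma muniq F e1 e2 x : trivIset F -> e1 \in F -> e2 \in F -> x \in e1 -> x \in e2 -> e1 = e2.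
Proof.
move=> /trivIsetP tF h1 h2 x1 x2; apply/eqP; apply/negPn/negP => ne.
by move: (tF _ _ h1 h2 ne) => /disjP /(_ x x1 x2).
Qed.

Lemma trivU1 F h : trivIset F -> (forall f, f \in F -> f != h -> [disjoint f & h]) ->
  trivIset (h |: F).
Proof.
move=> /trivIsetP tF H; apply/trivIsetP => A B; rewrite !inE.
case/predU1P => [->|AF]; case/predU1P => [->|BF] //; first by rewrite eqxx.
- by move=> ne; rewrite disjoint_sym; apply: H => //; rewrite eq_sym.
- by move=> ne; apply: H.
- exact: tF.
Qed.

Lemma nu_ge X M : M \subset X -> trivIset M -> #|M| <= nu X.
Proof.
move=> sMX tM; rewrite /nu.
by apply: (@leq_bigmax_cond _ (fun M => (M \in powerset X) && trivIset M)); rewrite powersetE sMX.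
Qed.

Lemma bigmax_wit (I : finType) (P : pred I) (G : I -> nat) i0 : P i0 ->
  exists2 i, P i & G i = \max_(j | P j) G j.
Proof.
move=> Pi0; case: (arg_maxnP G Pi0) => i Pi H; exists i => //.
apply/eqP; rewrite eqn_leq (leq_bigmax_cond i Pi) /=.
by apply/bigmax_leqP.
Qed.

Lemma nu_wit X : exists M, [/\ M \subset X, trivIset M & #|M| = nu X].
Proof.
have P0 : (set0 \in powerset X) && trivIset (set0 : {set {set T}}).
  rewrite powersetE sub0set /=; apply/trivIsetP => A B; by rewrite inE.
case: (@bigmax_wit _ (fun M => (M \in powerset X) && trivIset M) (fun M => #|M|) _ P0).
by move=> M /andP[]; rewrite powersetE => sM tM eM; exists M.
Qed.

Lemma nu_le_card X : nu X <= #|X|.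
Proof.
apply/bigmax_leqP => M /andP[]; rewrite powersetE => sM _; exact: subset_leq_card.
Qed.

Lemma bigmin_le (I : finType) (P : pred I) (G : I -> nat) d i0 :
  P i0 -> \big[minn/d]_(i | P i) G i <= G i0.
Proof.
move=> Pi0; rewrite -big_filter.
have: i0 \in [seq i <- index_enum I | P i] by rewrite mem_filter Pi0 mem_index_enum.
elim: [seq i <- index_enum I | P i] => //= j r IH; rewrite in_cons big_cons.
case/predU1P => [->|/IH]; first exact: geq_minl.
by move/(leq_trans _); apply; apply: geq_minr.
Qed.

Lemma bigmin_wit (I : finType) (P : pred I) (G : I -> nat) d i0 :
  P i0 -> (forall i, P i -> G i <= d) ->
  exists2 i, P i & G i = \big[minn/d]_(j | P j) G j.
Proof.
move=> Pi0 Hd.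
have: (\big[minn/d]_(j | P j) G j = d) \/ exists2 i, P i & G i = \big[minn/d]_(j | P j) G j.
  apply: (big_rec (fun x => x = d \/ exists2 i, P i & G i = x)); first by left.
  move=> i x Pi [->|[k Pk <-]].
    by right; exists i => //; apply/esym/minn_idPl/Hd.
  by right; case: (leqP (G i) (G k)) => H; [exists i => //; apply/esym/minn_idPl |
     exists k => //; apply/esym/minn_idPr/ltnW].
case=> [Hm|//]; exists i0 => //; apply/eqP; rewrite eqn_leq {1}Hm Hd //=; rewrite -Hm; exact: bigmin_le.
Qed.

Lemma nu_aug X N g : N \subset X -> trivIset N -> g \in X -> g != set0 ->
  (forall f, f \in N -> [disjoint f & g]) -> #|N|.+1 <= nu X.
Proof.
move=> sN tN gX g0 H.
have gN : g \notin N.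
  case/set0Pn: (g0) => z zg0; apply/negP => /H /disjP D; exact (D z zg0 zg0).
have := nu_ge (M := g |: N) (X := X); rewrite cardsU1 gN add1n; apply.
  by rewrite subUset sub1set gX sN.
by apply: trivU1 => // f fN _; apply: H.
Qed.

End Basics.

Lemma ar a b c l : a <= c -> c <= l -> b <= l -> a + b = 2 * l -> a = c /\ b = l.
Proof. move=> /leP ? /leP ? /leP ?; rewrite -multE -plusE => ?; split; lia. Qed.

Section Exch.
Variable T : finType.
Implicit Types (A B e f g h : {set T}) (F M N X Y E : {set {set T}}).

Lemma disj_self A : A != set0 -> ~~ [disjoint A & A].
Proof. by case/set0Pn => z zA; apply/negP => /disjP D; exact (D z zA zA). Qed.

Lemma nu_exch X Y g h :
  (forall f, f \in X -> f != g -> f \in Y) -> h \in Y -> h != set0 ->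
  (forall f, f \in X -> f != g -> ~~ [disjoint f & h] -> ~~ [disjoint f & g]) ->
  nu X <= nu Y.
Proof.
move=> H1 hY h0 H3; case: (nu_wit X) => N [sN tN <-].
case: (boolP (g \in N)) => gN; last first.
  apply: nu_ge tN; apply/subsetP => f fN; apply: H1 (subsetP sN f fN) _.
  by apply: contraNneq gN => <-.
have tN' := trivIsetP tN.
have hN : h \notin N :\ g.
  apply/negP; rewrite !inE => /andP[hg hN].
  have := H3 _ (subsetP sN _ hN) hg (disj_self h0).
  by rewrite (tN' _ _ hN gN hg).
have disj : forall f, f \in N :\ g -> f != h -> [disjoint f & h].
  move=> f; rewrite !inE => /andP[fg fN] _; apply/negPn/negP => nd.
  by move: (H3 _ (subsetP sN _ fN) fg nd); rewrite (tN' _ _ fN gN fg).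
have -> : #|N| = #|h |: (N :\ g)| by rewrite cardsU1 hN (cardsD1 g N) gN.
apply: nu_ge.
  rewrite subUset sub1set hY /=; apply/subsetP => f; rewrite !inE => /andP[fg fN].
  exact: H1 (subsetP sN _ fN) fg.
apply: trivU1 => //; apply: trivIsetS tN; exact: subsetDl.
Qed.

Lemma mmP E F : max_matching E F -> [/\ F \subset E, trivIset F & #|F| = nu E].
Proof. by case/andP => /andP[-> ->] /eqP. Qed.

Lemma swap_mm E F g h : max_matching E F -> g \in F -> h \in E -> h \notin F ->
  (forall f, f \in F -> f != g -> [disjoint f & h]) -> max_matching E (h |: (F :\ g)).
Proof.
move=> /mmP[sF tF cF] gF hE hF H.
have hFg : h \notin F :\ g by rewrite !inE negb_and hF orbT.
apply/andP; split; [apply/andP; split|].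
- rewrite subUset sub1set hE; apply: subset_trans sF; exact: subsetDl.
- apply: trivU1; first by apply: trivIsetS tF; exact: subsetDl.
  by move=> f; rewrite !inE => /andP[fg fF] _; apply: H.
- by rewrite cardsU1 hFg -cF (cardsD1 g F) gF.
Qed.

End Exch.

Section Graph.
Variable T : finType.
Variable E : {set {set T}}.
Hypothesis sE : simple_graph E.
Implicit Types (A B e f g h : {set T}) (F M N X Y : {set {set T}}) (x y z u v w : T).

Lemma edge2 e : e \in E -> #|e| = 2.
Proof. by move=> eE; move/forallP: sE => /(_ e); rewrite eE => /eqP. Qed.

Lemma edge_n0 e : e \in E -> e != set0.
Proof. by move=> /edge2 c; rewrite -card_gt0 c. Qed.

Lemma edge_other e x : e \in E -> x \in e -> exists2 y, y != x & e = [set x; y].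
Proof.
move=> /edge2/eqP/cards2P [a [b [ab ->]]]; rewrite !inE => /predU1P [->|/eqP ->].
  by exists b; rewrite // eq_sym.
by exists a => //; rewrite setUC.
Qed.

Lemma set2_inj x y z : y != x -> [set x; y] = [set x; z] -> y = z.
Proof.
move=> yx eq; have : y \in [set x; z] by rewrite -eq !inE eqxx orbT.
by rewrite !inE (negbTE yx) => /eqP.
Qed.

Lemma degS v : [set f in E | v \in f] = [set f in E | v \in f]. Proof. by []. Qed.

Lemma deg1_uniq v e1 e2 : deg E v = 1 -> e1 \in E -> v \in e1 -> e2 \in E -> v \in e2 ->
  e1 = e2.
Proof.
rewrite /deg => /eqP/cards1P [a Ha] e1E v1 e2E v2.
have : e1 \in [set f in E | v \in f] by rewrite inE e1E v1.
have : e2 \in [set f in E | v \in f] by rewrite inE e2E v2.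
by rewrite Ha !inE => /eqP -> /eqP ->.
Qed.

Lemma deg1_ex v : deg E v = 1 -> exists2 e, e \in E & v \in e.
Proof.
rewrite /deg => /eqP/cards1P [a Ha].
have : a \in [set f in E | v \in f] by rewrite Ha inE.
by rewrite inE => /andP[]; exists a.
Qed.

Lemma deg2_cases v e1 e2 : deg E v = 2 -> e1 \in E -> v \in e1 -> e2 \in E -> v \in e2 ->
  e1 != e2 -> forall e, e \in E -> v \in e -> e = e1 \/ e = e2.
Proof.
rewrite /deg => c2 e1E v1 e2E v2 ne e eE ve.
set S := [set f in E | v \in f] in c2.
have S1 : e1 \in S by rewrite inE e1E v1.
have S2 : e2 \in S by rewrite inE e2E v2.
have Se : e \in S by rewrite inE eE ve.
have : #|S :\ e1| == 1 by move: c2; rewrite (cardsD1 e1 S) S1 add1n => -[->].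
move=> /cards1P [a Ha].
case: (e =P e1) => [|ne1]; [by left|right].
have : e2 \in S :\ e1 by rewrite in_setD1 S2 eq_sym ne.
have : e \in S :\ e1 by rewrite in_setD1 Se andbT; apply/eqP.
by rewrite Ha !inE => /eqP -> /eqP ->.
Qed.

End Graph.

Lemma ndisjP (T : finType) (A B : {set T}) : ~~ [disjoint A & B] -> exists z, z \in A /\ z \in B.
Proof. rewrite -setI_eq0 => /set0Pn [z]; rewrite inE => /andP[]; by exists z. Qed.

Lemma ndisjI (T : finType) (A B : {set T}) z : z \in A -> z \in B -> ~~ [disjoint A & B].
Proof. by move=> zA zB; apply/negP => /disjP D; exact (D z zA zB). Qed.

Section Core.
Variables (T : finType) (E FL Fl M : {set {set T}}).
Hypotheses (sE : simple_graph E) (mL : max_matching E FL) (ml : max_matching E Fl)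
  (hLl : nu (E :\: FL) = 2 * nu (E :\: Fl)) (sM : M \subset E :\: FL) (tM : trivIset M)
  (cM : #|M| = nu (E :\: FL)).

Lemma M_notFL f : f \in M -> f \notin FL.
Proof. by move/(subsetP sM); rewrite inE => /andP[]. Qed.

Lemma M_E f : f \in M -> f \in E.
Proof. by move/(subsetP sM); rewrite inE => /andP[]. Qed.

Lemma core_facts : Fl :\: FL \subset M /\ #|M :\: Fl| = nu (E :\: Fl).
Proof.
case/mmP: mL => sFL tFL cFL; case/mmP: ml => sFl tFl cFl.
have h1 : #|M :\: Fl| <= nu (E :\: Fl).
  apply: nu_ge; last exact: trivIsetD.
  by apply/subsetP => f; rewrite !inE => /andP[-> /M_E ->].
have h2 : #|FL :\: Fl| <= nu (E :\: Fl).
  apply: nu_ge; last exact: trivIsetD.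
  by apply/subsetP => f; rewrite !inE => /andP[-> /(subsetP sFL) ->].
have h3 : #|Fl :\: FL| = #|FL :\: Fl|.
  have a := cardsID FL Fl; have b := cardsID Fl FL; rewrite setIC cFL in b.
  rewrite cFl in a; move: a b; rewrite -!plusE; lia.
have h4 : M :&: Fl \subset Fl :\: FL.
  by apply/subsetP => f; rewrite !inE => /andP[fM ->]; rewrite (M_notFL fM).
have h5 : #|M :&: Fl| + #|M :\: Fl| = 2 * nu (E :\: Fl) by rewrite cardsID cM hLl.
have h2' : #|Fl :\: FL| <= nu (E :\: Fl) by rewrite h3.
have [e1 e2] := ar (subset_leq_card h4) h2' h1 h5.
split => //.
have : M :&: Fl == Fl :\: FL by rewrite eqEcard h4 e1 leqnn.
by move/eqP <-; exact: subsetIl.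
Qed.

Lemma core_aug g : g \in E -> g \notin Fl ->
  exists f z, [/\ f \in M, f \notin Fl, z \in f & z \in g].
Proof.
move=> gE gFl; case: core_facts => _ cMl.
case: (boolP [exists f in M :\: Fl, ~~ [disjoint f & g]]).
  case/existsP => f /andP[]; rewrite !inE => /andP[fFl fM] /ndisjP [z [zf zg]].
  by exists f, z.
move/existsPn => H.
exfalso; suff : #|M :\: Fl|.+1 <= nu (E :\: Fl) by rewrite cMl ltnn.
apply: (nu_aug (g := g)).
- by apply/subsetP => f; rewrite !inE => /andP[-> /M_E ->].
- exact: trivIsetD.
- by rewrite inE gFl.
- move: gE; exact: edge_n0.
- by move=> f fM; move: (H f); rewrite fM negbK.
Qed.

End Core.

Lemma three_cases (T : finType) (t : {set T}) a b c x : #|t| = 3 ->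
  a \in t -> b \in t -> c \in t -> a != b -> a != c -> b != c -> x \in t ->
  [\/ x = a, x = b | x = c].
Proof.
move=> c3 a_t bt ct ab ac bc xt.
case: (x =P a) => [->|xa]; first by constructor 1.
case: (x =P b) => [->|xb]; first by constructor 2.
constructor 3.
have : #|(t :\ a) :\ b| == 1.
  move: c3; rewrite (cardsD1 a t) a_t (cardsD1 b (t :\ a)) in_setD1 bt eq_sym ab.
  by rewrite !add1n => -[->].
case/cards1P => z Hz.
have : c \in (t :\ a) :\ b by rewrite !in_setD1 ct andbT; apply/andP; split; rewrite eq_sym.
have : x \in (t :\ a) :\ b by rewrite !in_setD1 xt andbT; apply/andP; split; apply/eqP.
by rewrite Hz !inE => /eqP -> /eqP ->.
Qed.

Section Tri.
Variables (T : finType) (E : {set {set T}}) (ch : {set T} -> T).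
Hypotheses (sE : simple_graph E) (vc : valid_choice E ch).

Lemma tri_edges t x y : t \in Tri2 E -> x \in t -> y \in t -> x != y -> [set x; y] \in E.
Proof.
rewrite inE => /andP[/andP[_ /forall_inP H] _] xt yt xy.
by move: (H x xt) => /forall_inP /(_ y yt) /implyP; apply.
Qed.

Lemma tri_card t : t \in Tri2 E -> #|t| = 3.
Proof. by rewrite inE => /andP[/andP[/eqP -> _] _]. Qed.

Lemma tri_data t : t \in Tri2 E -> exists w b,
  [/\ w \in t, b \in t, w != ch t, b != ch t & b != w] /\ deg E w = 2.
Proof.
move=> tT; have [vt dv] := vc tT.
move: (tT); rewrite inE => /andP[_ c2].
set S := [set v in t | deg E v == 2] in c2.
have : 0 < #|S :\ ch t|.
  move: c2; rewrite (cardsD1 (ch t) S).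
  by case: (ch t \in S); rewrite ?add1n ?add0n // => /ltnW.
rewrite card_gt0 => /set0Pn [w]; rewrite in_setD1 inE => /andP[wv /andP[wt /eqP dw]].
have : 0 < #|t :\: [set ch t; w]|.
  have := cardsID [set ch t; w] t; rewrite (tri_card tT).
  have : #|t :&: [set ch t; w]| <= 2.
    apply: (leq_trans (subset_leq_card (subsetIr t _))); rewrite cards2; by case: (_ != _).
  rewrite -plusE => /leP h1 h2; apply/leP; lia.
rewrite card_gt0 => /set0Pn [b]; rewrite !inE negb_or => /andP[/andP[bv bw] bt].
by exists w, b; split.
Qed.

End Tri.

Section Twin.
Variables (T : finType) (E : {set {set T}}).
Hypothesis sE : simple_graph E.
Variables (p q b : T).
Hypotheses (pq : p != q) (pb : p != b) (qb : q != b)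
  (Epq : [set p; q] \in E) (Epb : [set p; b] \in E) (Eqb : [set q; b] \in E)
  (Hp : forall e, e \in E -> p \in e -> e = [set p; q] \/ e = [set p; b])
  (Hq : forall e, e \in E -> q \in e -> e = [set p; q] \/ e = [set q; b]).

Lemma q_notin_pb : q \notin [set p; b].
Proof. by rewrite !inE negb_or eq_sym pq qb. Qed.

Lemma pq_ne_pb : [set p; q] != [set p; b].
Proof. by apply/eqP => e; move: q_notin_pb; rewrite -e !inE eqxx orbT. Qed.

Lemma qb_ne_pb : [set q; b] != [set p; b].
Proof. by apply/eqP => e; move: q_notin_pb; rewrite -e !inE eqxx. Qed.

Lemma twin_swap F : max_matching E F -> [set p; b] \in F ->
  max_matching E ([set q; b] |: (F :\ [set p; b])) /\
  nu (E :\: ([set q; b] |: (F :\ [set p; b]))) = nu (E :\: F).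
Proof.
move=> mF pbF; have [sF tF cF] := mmP mF.
have qbF : [set q; b] \notin F.
  apply/negP => qbF; move/eqP: qb_ne_pb; apply.
  by apply: (muniq (x := b) tF) => //; rewrite !inE eqxx orbT.
have pqF : [set p; q] \notin F.
  apply/negP => pqF; move/eqP: pq_ne_pb; apply.
  by apply: (muniq (x := p) tF) => //; rewrite !inE eqxx.
split.
  apply: swap_mm => // f fF fpb; apply/disjP => z zf.
  rewrite !inE => /predU1P [ez|/eqP ez]; subst z.
    case: (Hq (subsetP sF _ fF) zf) => ef; subst f; [by rewrite fF in pqF | by rewrite fF in qbF].
  by move/eqP: fpb; apply; apply: (muniq (x := b) tF) => //; rewrite !inE eqxx orbT.
set F' := [set q; b] |: (F :\ [set p; b]).
have inF' f : (f \in F') = (f == [set q; b]) || ((f != [set p; b]) && (f \in F)).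
  by rewrite !inE.
apply/eqP; rewrite eqn_leq; apply/andP; split.
- apply: (nu_exch (g := [set p; b]) (h := [set q; b])).
  + move=> f; rewrite !in_setD inF' negb_or => /andP[/andP[fqb H] fE] fpb.
    by rewrite fE andbT; rewrite fpb in H.
  + by rewrite in_setD Eqb qbF.
  + exact: edge_n0 Eqb.
  + move=> f; rewrite in_setD inF' negb_or => /andP[/andP[fqb _] fE] fpb /ndisjP [z [zf]].
    rewrite !inE => /predU1P [ez|/eqP ez]; subst z.
      case: (Hq fE zf) => ef; last by rewrite ef eqxx in fqb.
      by subst f; apply: (ndisjI (z := p)); rewrite !inE eqxx.
    by apply: (ndisjI (z := b)); rewrite // !inE eqxx orbT.
- apply: (nu_exch (g := [set q; b]) (h := [set p; b])).
  + move=> f; rewrite !in_setD inF' => /andP[fF fE] fqb; rewrite fE andbT negb_or fqb /=.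
    by rewrite negb_and fF orbT.
  + by rewrite in_setD Epb inF' eq_sym (negbTE qb_ne_pb) eqxx.
  + exact: edge_n0 Epb.
  + move=> f; rewrite in_setD => /andP[fF fE] fqb /ndisjP [z [zf]].
    rewrite !inE => /predU1P [ez|/eqP ez]; subst z.
      case: (Hp fE zf) => ef; last by rewrite ef pbF in fF.
      by subst f; apply: (ndisjI (z := q)); rewrite !inE eqxx ?orbT.
    by apply: (ndisjI (z := b)); rewrite // !inE eqxx orbT.
Qed.

End Twin.

Section P1.
Variables (T : finType) (E : {set {set T}}) (ch : {set T} -> T).
Hypotheses (sE : simple_graph E) (vc : valid_choice E ch).

Lemma max_aug F g : max_matching E F -> g \in E -> (forall z, z \in g -> z \notin Vof F) -> False.
Proof.
move=> mF gE H; have [sF tF cF] := mmP mF.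
suff : #|F|.+1 <= nu E by rewrite cF ltnn.
apply: (nu_aug (g := g)) => //; first exact: (@edge_n0 T E sE g gE).
move=> f fF; apply/disjP => z zf zg; move: (H z zg) => /negP; apply.
by apply/inVofP; exists f.
Qed.

Lemma tri_full t : t \in Tri2 E -> exists w b,
  [/\ w != ch t, b != ch t, b != w, deg E (ch t) = 2 & deg E w = 2] /\
  [/\ [set ch t; w] \in E, [set ch t; b] \in E, [set w; b] \in E,
      (forall e, e \in E -> ch t \in e -> e = [set ch t; w] \/ e = [set ch t; b]) &
      (forall e, e \in E -> w \in e -> e = [set ch t; w] \/ e = [set w; b])] /\
  [/\ ch t \in t, w \in t & b \in t].
Proof.
move=> tT; have [vt dv] := vc tT.
have [w [b [[wt bt wv bv bw] dw]]] := tri_data vc tT.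
have Evw : [set ch t; w] \in E by apply: (tri_edges tT); rewrite // eq_sym.
have Evb : [set ch t; b] \in E by apply: (tri_edges tT); rewrite // eq_sym.
have Ewb : [set w; b] \in E by apply: (tri_edges tT); rewrite // eq_sym.
exists w, b; split; [|split]; [split => //| split => //|by []].
- apply: (deg2_cases dv) => //; try by rewrite !inE eqxx.
  apply/eqP => e; have : w \in [set ch t; b] by rewrite -e !inE eqxx orbT.
  by rewrite !inE (negbTE wv) eq_sym (negbTE bw).
- apply: (deg2_cases dw) => //; try by rewrite !inE eqxx ?orbT.
  apply/eqP => e; have : ch t \in [set w; b] by rewrite -e !inE eqxx.
  by rewrite !inE eq_sym (negbTE wv) eq_sym (negbTE bv).
Qed.

Lemma part1 FL Fl x : max_matching E FL -> max_matching E Fl ->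
  nu (E :\: FL) = 2 * nu (E :\: Fl) -> x \in V1 E ch -> x \in Vof FL -> x \notin Vof Fl -> False.
Proof.
move=> mL ml hLl xV xL xl.
have [sFL tFL cFL] := mmP mL; have [sFl tFl cFl] := mmP ml.
case: (nu_wit (E :\: FL)) => M [sM tM cM].
have [cs _] := core_facts mL ml hLl sM tM cM.
have aug := core_aug sE mL ml hLl sM tM cM.
have inM f : f \in Fl -> f \notin FL -> f \in M.
  by move=> a b; apply: (subsetP cs); rewrite inE a b.
have notVl f : f \in Fl -> x \in f -> False.
  by move=> fF xf; move/negP: xl; apply; apply/inVofP; exists f.
case/inVofP: xL => e eFL xe; have eE := subsetP sFL _ eFL.
have eFl : e \notin Fl by apply/negP => /notVl; apply.
move: xV; rewrite in_setU in_set => /orP [/eqP d1|].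
  have [u ux eq] := edge_other sE eE xe.
  have ue : u \in e by rewrite eq !inE eqxx orbT.
  have : u \in Vof Fl.
    apply/negPn/negP => ul; apply: (max_aug ml eE) => z; rewrite eq !inE.
    by case/predU1P => [->|/eqP ->].
  case/inVofP => h hFl uh.
  have hFL : h \notin FL.
    apply/negP => hFL; have ehh := muniq tFL eFL hFL ue uh; subst h.
    by rewrite hFl in eFl.
  have hM := inM _ hFl hFL.
  have [f [z [fM fFl zf]]] := aug _ eE eFl.
  rewrite eq !inE => /predU1P [ez|/eqP ez]; subst z.
    have := deg1_uniq d1 (M_E sM fM) zf eE xe => efe; subst f.
    by move: (M_notFL sM fM); rewrite eFL.
  by have := muniq tM fM hM zf uh => efh; subst f; rewrite hFl in fFl.
case/imsetP => t tT ex; subst x.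
have [w [b [[wv bv bw dv dw] [[Evw Evb Ewb Hv Hw] _]]]] := tri_full tT.
have wl : w \in Vof Fl.
  apply/negPn/negP => wl; apply: (max_aug ml Evw) => z; rewrite !inE.
  by case/predU1P => [->|/eqP ->].
case/inVofP: wl => h hFl wh.
have ewb : h = [set w; b].
  case: (Hw _ (subsetP sFl _ hFl) wh) => // ehv; subst h.
  by exfalso; apply: (notVl _ hFl); rewrite !inE eqxx.
subst h.
have wbFL : [set w; b] \notin FL.
  apply/negP => wbFL; case: (Hv _ eE xe) => ee; subst e.
    have := muniq tFL eFL wbFL (_ : w \in _) (_ : w \in _).
    move/(_ ltac:(by rewrite !inE eqxx orbT) ltac:(by rewrite !inE eqxx)) => ee.
    by move: xe; rewrite ee !inE eq_sym (negbTE wv) eq_sym (negbTE bv).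
  have := muniq tFL eFL wbFL (_ : b \in _) (_ : b \in _).
  move/(_ ltac:(by rewrite !inE eqxx orbT) ltac:(by rewrite !inE eqxx orbT)) => ee.
  by move: xe; rewrite ee !inE eq_sym (negbTE wv) eq_sym (negbTE bv).
have wbM := inM _ hFl wbFL.
have [f [z [fM fFl zf ze]]] := aug _ eE eFl.
have fE := M_E sM fM.
suff : f = [set w; b] by move=> ef; subst f; rewrite hFl in fFl.
have key : w \in f \/ b \in f.
  have zvwb : z = ch t \/ z = w \/ z = b.
    by case: (Hv _ eE xe) => ee; subst e; move: ze; rewrite !inE => /predU1P [|/eqP]; auto.
  case: zvwb => [ez|[ez|ez]]; subst z; auto.
  case: (Hv _ fE zf) => ef; subst f; rewrite !inE eqxx ?orbT; auto.
case: key => H.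
  by apply: (muniq tM fM wbM H); rewrite !inE eqxx.
by apply: (muniq tM fM wbM H); rewrite !inE eqxx orbT.
Qed.

End P1.

Lemma vof_local (T : finType) (F F' : {set {set T}}) (x : T) :
  (forall e : {set T}, x \in e -> (e \in F') = (e \in F)) -> (x \in Vof F') = (x \in Vof F).
Proof.
move=> H; apply/inVofP/inVofP => -[e eF xe]; exists e => //; by rewrite ?H // -H.
Qed.

Lemma swap_local (T : finType) (F : {set {set T}}) (g h : {set T}) (x : T) :
  x \notin g -> x \notin h -> forall e : {set T}, x \in e -> (e \in h |: (F :\ g)) = (e \in F).
Proof.
move=> xg xh e xe; rewrite !inE.
have -> : (e == h) = false by apply/negP => /eqP ee; subst e; rewrite xe in xh.
have -> : (e != g) by apply/negP => /eqP ee; subst e; rewrite xe in xg.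
by [].
Qed.

Section P2.
Variables (T : finType) (E : {set {set T}}) (ch : {set T} -> T).
Hypotheses (sE : simple_graph E) (vc : valid_choice E ch) (conn : connected E)
  (hL : Lnu E = 2 * lnu E).
Implicit Types (FL Fl F M : {set {set T}}).

Definition good FL Fl (x : T) := x \in Vof (FL :&: Fl) :|: (Vof Fl :\: Vof FL).
Definition opt FL Fl := [/\ max_matching E FL, nu (E :\: FL) = Lnu E,
  max_matching E Fl & nu (E :\: Fl) = lnu E].

Lemma good_local FL Fl (FL' Fl' : {set {set T}}) (x : T) :
  (forall e : {set T}, x \in e -> (e \in FL') = (e \in FL)) ->
  (forall e : {set T}, x \in e -> (e \in Fl') = (e \in Fl)) -> good FL Fl x -> good FL' Fl' x.
Proof.
move=> H1 H2; rewrite /good !in_setU !in_setD (vof_local H1) (vof_local H2).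
rewrite (@vof_local _ (FL :&: Fl) (FL' :&: Fl')) // => e xe.
by rewrite !inE H1 // H2.
Qed.

Lemma lnu_le F : max_matching E F -> lnu E <= nu (E :\: F).
Proof. move=> mF; rewrite /lnu; exact: (@bigmin_le _ (max_matching E) (fun F => nu (E :\: F)) #|E| F mF). Qed.

Lemma opt_exists : exists FL Fl, opt FL Fl.
Proof.
case: (nu_wit E) => M0 [s0 t0 c0].
have m0 : max_matching E M0 by rewrite /max_matching /matching s0 t0 c0 eqxx.
have [FL mL eL] := @bigmax_wit _ (max_matching E) (fun F => nu (E :\: F)) M0 m0.
have Hb : forall F, max_matching E F -> nu (E :\: F) <= #|E|.
  move=> F _; apply: leq_trans (nu_le_card _) _; apply: subset_leq_card; exact: subsetDl.
have [Fl ml el] := @bigmin_wit _ (max_matching E) (fun F => nu (E :\: F)) #|E| M0 m0 Hb.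
by exists FL, Fl; split.
Qed.

Lemma edge_in3 v w b e : e \in E ->
  (forall e, e \in E -> v \in e -> e = [set v; w] \/ e = [set v; b]) ->
  (forall e, e \in E -> w \in e -> e = [set v; w] \/ e = [set w; b]) ->
  (forall e, e \in E -> b \in e -> e = [set v; b] \/ e = [set w; b]) ->
  forall z, z \in e -> z \in [set v; w; b] ->
  [\/ e = [set v; w], e = [set v; b] | e = [set w; b]].
Proof.
move=> eE Hv Hw Hb z ze; rewrite !inE => /orP[/orP[]|] /eqP ez; subst z.
- by case: (Hv _ eE ze) => ->; [constructor 1|constructor 2].
- by case: (Hw _ eE ze) => ->; [constructor 1|constructor 3].
- by case: (Hb _ eE ze) => ->; [constructor 2|constructor 3].
Qed.

Lemma noK3 v w b FL : v != w -> v != b -> w != b ->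
  [set v; w] \in E -> [set v; b] \in E -> [set w; b] \in E ->
  (forall e, e \in E -> v \in e -> e = [set v; w] \/ e = [set v; b]) ->
  (forall e, e \in E -> w \in e -> e = [set v; w] \/ e = [set w; b]) ->
  (forall e, e \in E -> b \in e -> e = [set v; b] \/ e = [set w; b]) ->
  max_matching E FL -> nu (E :\: FL) = Lnu E -> False.
Proof.
move=> vw vb wb Evw Evb Ewb Hv Hw Hb mL eL.
set S := [set v; w; b].
have clS : forall e z y, e \in E -> z \in e -> z \in S -> y \in e -> y \in S.
  move=> e z y eE ze zS ye; case: (edge_in3 eE Hv Hw Hb ze zS) => ee; subst e;
  by move: ye; rewrite !inE => /orP[]/eqP->; rewrite eqxx ?orbT.
have allS : forall x, x \in S.
  move=> x; have : closed (adj E) S.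
    move=> y1 y2 a; apply/idP/idP => yS.
      by apply: (clS _ y1 y2 a) => //; rewrite !inE eqxx ?orbT.
    by apply: (clS _ y2 y1 a) => //; rewrite !inE eqxx ?orbT.
  move=> cl; have := closed_connect cl (x := v) (y := x).
  move: conn => /forallP /(_ v) /forallP /(_ x) -> /(_ isT) <-.
  by rewrite !inE eqxx.
have in3 : forall e, e \in E -> [\/ e = [set v; w], e = [set v; b] | e = [set w; b]].
  move=> e eE; case/set0Pn: (edge_n0 sE eE) => z ze.
  exact: (edge_in3 eE Hv Hw Hb ze (allS z)).
have le1 : forall F, F \subset E -> trivIset F -> #|F| <= 1.
  move=> F sF tF; apply/card_le1_eqP => e1 e2 h1 h2.
  have [z [z1 z2]] : exists z, z \in e2 /\ z \in e1.
    by case: (in3 _ (subsetP sF _ h1)) => ->; case: (in3 _ (subsetP sF _ h2)) => ->;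
      solve [ exists v; split; by rewrite !inE eqxx ?orbT
            | exists w; split; by rewrite !inE eqxx ?orbT
            | exists b; split; by rewrite !inE eqxx ?orbT ].
  exact: (muniq tF h2 h1 z1 z2).
have [sFL tFL _] := mmP mL.
have L1 : Lnu E <= 1.
  case: (nu_wit (E :\: FL)) => N [sN tN cN]; rewrite -eL -cN; apply: le1 tN.
  by apply: subset_trans sN (subsetDl _ _).
have L0 : Lnu E = 0 by move: L1; rewrite hL; case: (lnu E) => [|n]; rewrite ?muln0 // mulnS.
have vwvb : [set v; w] != [set v; b].
  apply/eqP => e; have : w \in [set v; b] by rewrite -e !inE eqxx orbT.
  by rewrite !inE eq_sym (negbTE vw) (negbTE wb).
suff [e [eE eF]] : exists e, e \in E /\ e \notin FL.
  have := nu_ge (X := E :\: FL) (M := [set e]); rewrite cards1 eL L0.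
  by rewrite sub1set inE eE eF trivIset1 => /(_ isT isT).
case: (boolP ([set v; w] \in FL)) => h1; last by exists [set v; w].
exists [set v; b]; split => //; apply/negP => h2; move/eqP: vwvb; apply.
by apply: (muniq tFL h1 h2 (x := v)); rewrite !inE eqxx.
Qed.

End P2.

Section P3.
Variables (T : finType) (E : {set {set T}}) (ch : {set T} -> T).
Hypotheses (sE : simple_graph E) (vc : valid_choice E ch) (conn : connected E)
  (hL : Lnu E = 2 * lnu E).
Implicit Types (FL Fl F M : {set {set T}}).

Lemma set2_mem (x y z : T) : z \in [set x; y] -> z = x \/ z = y.
Proof. by rewrite !inE => /orP[]/eqP; auto. Qed.

Lemma leaf_u_notV1 v u w e g : deg E v = 1 -> e \in E -> e = [set v; u] -> g \in E ->
  g = [set u; w] -> u != v -> w != u -> e != g -> u \notin V1 E ch.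
Proof.
move=> d1 eE eq gE eqg uv wu eg.
have ue : u \in e by rewrite eq !inE eqxx orbT.
have ug : u \in g by rewrite eqg !inE eqxx.
have ve : v \in e by rewrite eq !inE eqxx.
rewrite in_setU in_set; apply/negP => /orP[/eqP du|/imsetP[t tT et]].
  by move/eqP: eg; apply; apply: (deg1_uniq du eE ue gE ug).
have [w1 [b1 [[w1v b1v bw1 dv _] [[Ew1 Eb1 Ewb1 _ _] _]]]] := tri_full vc tT.
rewrite -et in w1v b1v dv Ew1 Eb1.
have Hu := deg2_cases dv eE ue gE ug eg.
have nb : forall y, y != u -> [set u; y] \in E -> y = v \/ y = w.
  move=> y yu Ey; case: (Hu _ Ey (_ : u \in _)) => [|ey|ey]; first by rewrite !inE eqxx.
    have : y \in e by rewrite -ey !inE eqxx orbT.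
    by rewrite eq => /set2_mem [|yu']; [left|by rewrite yu' eqxx in yu].
  have : y \in g by rewrite -ey !inE eqxx orbT.
  by rewrite eqg => /set2_mem [yu'|]; [by rewrite yu' eqxx in yu|right].
have vin : v \in [set w1; b1].
  move: bw1; case: (nb _ w1v Ew1) => ->; first by rewrite !inE eqxx.
  case: (nb _ b1v Eb1) => -> ; first by rewrite !inE eqxx orbT.
  by rewrite eqxx.
have := deg1_uniq d1 Ewb1 vin eE ve => ee.
have : u \in [set w1; b1] by rewrite ee.
by case/set2_mem => eu; [rewrite eu eqxx in w1v | rewrite eu eqxx in b1v].
Qed.

Lemma leaf_fix FL Fl v : opt E FL Fl -> deg E v = 1 -> ~~ good FL Fl v ->
  exists FL' Fl', [/\ opt E FL' Fl', good FL' Fl' v &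
    forall x, x \in V1 E ch -> good FL Fl x -> good FL' Fl' x].
Proof.
move=> [mL eL ml el] d1 bad.
have hLl : nu (E :\: FL) = 2 * nu (E :\: Fl) by rewrite eL el.
have [sFL tFL cFL] := mmP mL; have [sFl tFl cFl] := mmP ml.
case: (nu_wit (E :\: FL)) => M [sM tM cM].
have [cs _] := core_facts mL ml hLl sM tM cM.
have aug := core_aug sE mL ml hLl sM tM cM.
have [e eE ve] := deg1_ex d1.
have [u uv eq] := edge_other sE eE ve.
have ue : u \in e by rewrite eq !inE eqxx orbT.
have vl : v \notin Vof Fl.
  apply/negP => /inVofP [f fFl vf].
  have ef := deg1_uniq d1 (subsetP sFl _ fFl) vf eE ve; subst f.
  move: bad; rewrite /good in_setU in_setD negb_or => /andP[H1 H2].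
  case: (boolP (e \in FL)) => eFL.
    by move/negP: H1; apply; apply/inVofP; exists e => //; rewrite inE eFL fFl.
  move: H2; rewrite negb_and negbK => /orP[/inVofP [f2 fFL2 vf2]|/negP].
    by have := deg1_uniq d1 (subsetP sFL _ fFL2) vf2 eE ve => ef; subst f2; rewrite fFL2 in eFL.
  by apply; apply/inVofP; exists e.
have eFl : e \notin Fl by apply: contra vl => eFl; apply/inVofP; exists e.
have : u \in Vof Fl.
  apply/negPn/negP => ul; apply: (max_aug sE ml eE) => z; rewrite eq !inE.
  by case/predU1P => [->|/eqP ->].
case/inVofP => g gFl ug.
have gE := subsetP sFl _ gFl.
have [w wu eqg] := edge_other sE gE ug.
have ge : g != e by apply: contraNneq eFl => <-.
have wv : w != v.
  apply/eqP => ew; subst w; move/eqP: ge; apply; by rewrite eqg eq setUC.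
have gFL : g \in FL.
  apply/negPn/negP => gFL; have gM : g \in M by apply: (subsetP cs); rewrite inE gFL gFl.
  have [f [z [fM fFl zf ze]]] := aug _ eE eFl.
  move: ze; rewrite eq !inE => /predU1P [ez|/eqP ez]; subst z.
    have := deg1_uniq d1 (M_E sM fM) zf eE ve => ef; subst f.
    by move/eqP: ge; apply; apply: (muniq tM gM fM ug ue).
  by have := muniq tM fM gM zf ug => efg; subst f; rewrite gFl in fFl.
set Fl' := e |: (Fl :\ g).
have ml' : max_matching E Fl'.
  apply: swap_mm => // f fFl fg; apply/disjP => z zf; rewrite eq !inE => /predU1P [ez|/eqP ez]; subst z.
    by move/negP: vl; apply; apply/inVofP; exists f.
  by move/eqP: fg; apply; apply: (muniq tFl fFl gFl zf ug).
have inFl' f : (f \in Fl') = (f == e) || ((f != g) && (f \in Fl)) by rewrite !inE.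
have le : nu (E :\: Fl') <= nu (E :\: Fl).
  apply: (nu_exch (g := g) (h := e)).
  + move=> f; rewrite !in_setD inFl' negb_or => /andP[/andP[_ H] fE] fg.
    by rewrite fE andbT; rewrite fg in H.
  + by rewrite in_setD eE eFl.
  + exact: (edge_n0 sE eE).
  + move=> f; rewrite in_setD inFl' negb_or => /andP[/andP[fe _] fE] fg /ndisjP [z [zf]].
    rewrite eq !inE => /predU1P [ez|/eqP ez]; subst z.
      by have := deg1_uniq d1 fE zf eE ve => ef; rewrite ef eqxx in fe.
    exact: (ndisjI zf ug).
have el' : nu (E :\: Fl') = lnu E.
  by apply/eqP; rewrite eqn_leq (lnu_le ml') andbT -el.
have eFL : e \notin FL.
  apply/negP => eFL; move/eqP: ge; apply; exact: (muniq tFL gFL eFL ug ue).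
exists FL, Fl'; split.
- by split.
- rewrite /good in_setU in_setD; apply/orP; right; apply/andP; split.
    apply/negP => /inVofP [f fFL vf].
    by have := deg1_uniq d1 (subsetP sFL _ fFL) vf eE ve => ef; subst f; rewrite fFL in eFL.
  by apply/inVofP; exists e; rewrite // inFl' eqxx.
- move=> x xV gx.
  case: (boolP (x \in g)) => xg; last case: (boolP (x \in e)) => xe.
  + exfalso; move: xg; rewrite eqg => /set2_mem [ex|ex]; subst x.
      have eg : e != g by rewrite eq_sym.
      by move/negP: (leaf_u_notV1 d1 eE eq gE eqg uv wu eg); apply.
    apply: (part1 sE vc mL ml' _ xV).
    * by rewrite el' eL.
    * by apply/inVofP; exists g; rewrite // eqg !inE eqxx orbT.
    * apply/negP => /inVofP [f]; rewrite inFl' => /orP[/eqP ->|/andP[fg fFl]] wf.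
        by move: wf; rewrite eq => /set2_mem [ex|ex]; [rewrite ex eqxx in wv|rewrite ex eqxx in wu].
      move/eqP: fg; apply; apply: (muniq tFl fFl gFl wf); by rewrite eqg !inE eqxx orbT.
  + exfalso; move: xe; rewrite eq => /set2_mem [ex|ex]; subst x; first by rewrite gx in bad.
    by rewrite ug in xg.
  + apply: good_local gx => // f xf; exact: (swap_local Fl xg xe xf).
Qed.

End P3.

Section P4.
Variables (T : finType) (E : {set {set T}}) (ch : {set T} -> T).
Hypotheses (sE : simple_graph E) (vc : valid_choice E ch) (conn : connected E)
  (hL : Lnu E = 2 * lnu E).
Implicit Types (FL Fl F M : {set {set T}}).

Lemma tri_fix FL Fl t : opt E FL Fl -> t \in Tri2 E -> ~~ good FL Fl (ch t) ->
  exists FL' Fl', [/\ opt E FL' Fl', good FL' Fl' (ch t) &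
    forall x, x \in V1 E ch -> good FL Fl x -> good FL' Fl' x].
Proof.
move=> [mL eL ml el] tT bad.
have hLl : nu (E :\: FL) = 2 * nu (E :\: Fl) by rewrite eL el.
have [sFL tFL cFL] := mmP mL; have [sFl tFl cFl] := mmP ml.
case: (nu_wit (E :\: FL)) => M [sM tM cM].
have [cs _] := core_facts mL ml hLl sM tM cM.
have aug := core_aug sE mL ml hLl sM tM cM.
have [w [b [[wv bv bw dv dw] [[Evw Evb Ewb Hv Hw] [vt wt bt]]]]] := tri_full vc tT.
have vV : ch t \in V1 E ch by rewrite in_setU; apply/orP; right; apply/imsetP; exists t.
move: bad vV; set v := ch t => bad vV.
have vw : v != w by rewrite eq_sym.
have vb : v != b by rewrite eq_sym.
have wb : w != b by rewrite eq_sym.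
have vwvb : [set v; w] != [set v; b].
  apply/eqP => e; have : w \in [set v; b] by rewrite -e !inE eqxx orbT.
  by rewrite !inE (negbTE wv) (negbTE wb).
have vbwb : [set v; b] != [set w; b].
  apply/eqP => e; have : v \in [set w; b] by rewrite -e !inE eqxx.
  by rewrite !inE (negbTE vw) (negbTE vb).
have in1 (x y : T) : x \in [set x; y] by rewrite !inE eqxx.
have in2 (x y : T) : y \in [set x; y] by rewrite !inE eqxx orbT.
have bnV : b \notin V1 E ch.
  apply/negP; rewrite in_setU in_set => /orP[/eqP db|/imsetP[t' t'T et']].
    by move/eqP: vbwb; apply; apply: (deg1_uniq db Evb (in2 _ _) Ewb (in2 _ _)).
  have [_ db] := vc t'T; rewrite -et' in db.
  have Hb := deg2_cases db Evb (in2 _ _) Ewb (in2 _ _) vbwb.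
  exact: (noK3 sE conn hL vw vb wb Evw Evb Ewb Hv Hw Hb mL eL).
have wnV : w \notin V1 E ch.
  apply/negP; rewrite in_setU in_set => /orP[/eqP dw1|/imsetP[t' t'T et']].
    by rewrite dw in dw1.
  have [w1 [b1 [[w1v b1v bw1 _ _] [[Ew1 Eb1 _ _ _] [ct' w1t b1t]]]]] := tri_full vc t'T.
  rewrite -et' in w1v b1v Ew1 Eb1 ct'.
  have nb : forall y, y != w -> [set w; y] \in E -> y = v \/ y = b.
    move=> y yw Ey; case: (Hw _ Ey (in1 _ _)) => ey.
      have : y \in [set v; w] by rewrite -ey in2.
      by case/set2_mem => [|yw']; [left|by rewrite yw' eqxx in yw].
    have : y \in [set w; b] by rewrite -ey in2.
    by case/set2_mem => [yw'|]; [by rewrite yw' eqxx in yw|right].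
  have [vt' bt'] : v \in t' /\ b \in t'.
    move: bw1 w1t b1t; case: (nb _ w1v Ew1) => ->; case: (nb _ b1v Eb1) => -> //;
      by rewrite eqxx.
  have stt : t \subset t'.
    apply/subsetP => x xt.
    by case: (three_cases (tri_card tT) vt wt bt vw vb wb xt) => ->.
  have ett : t = t'.
    by apply/eqP; rewrite eqEcard stt (tri_card tT) (tri_card t'T).
  by move: wv; rewrite /v ett -et' eqxx.
have pres : forall FL' Fl' : {set {set T}},
    (forall x, x != v -> x != w -> x != b -> forall f : {set T}, x \in f -> (f \in FL') = (f \in FL)) ->
    (forall x, x != v -> x != w -> x != b -> forall f : {set T}, x \in f -> (f \in Fl') = (f \in Fl)) ->
    forall x, x \in V1 E ch -> good FL Fl x -> good FL' Fl' x.
  move=> FL' Fl' H1 H2 x xV gx.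
  case: (x =P v) => [ex|/eqP xv]; first by rewrite -ex gx in bad.
  case: (x =P w) => [ex|/eqP xw]; first by rewrite -ex xV in wnV.
  case: (x =P b) => [ex|/eqP xb]; first by rewrite -ex xV in bnV.
  by apply: good_local gx; [apply: H1 | apply: H2].
have nin (x y z : T) : x != y -> x != z -> x \notin [set y; z].
  by move=> a c; rewrite !inE negb_or a c.
case: (boolP (v \in Vof Fl)) => vl; last first.
  have wbIn : forall F, max_matching E F -> v \notin Vof F -> [set w; b] \in F.
    move=> F mF vF; have [sF _ _] := mmP mF.
    have : w \in Vof F.
      apply/negPn/negP => wF; apply: (max_aug sE mF Evw) => z /set2_mem [] ->//.
    case/inVofP => h hF wh; case: (Hw _ (subsetP sF _ hF) wh) => eh; subst h => //.
    by move/negP: vF; case; apply/inVofP; exists [set v; w].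
  have vL : v \notin Vof FL by apply/negP => vL; apply: (part1 sE vc mL ml hLl vV vL vl).
  have wbFL := wbIn _ mL vL; have wbFl := wbIn _ ml vl.
  have Hp : forall e, e \in E -> w \in e -> e = [set w; v] \/ e = [set w; b].
    by move=> e eE we; rewrite setUC; apply: Hw.
  have Hq : forall e, e \in E -> v \in e -> e = [set w; v] \/ e = [set v; b].
    by move=> e eE ve; rewrite [[set w; v]]setUC; apply: Hv.
  have [mL' eL'] := twin_swap sE wv vb Ewb Evb Hp Hq mL wbFL.
  have [ml' el'] := twin_swap sE wv vb Ewb Evb Hp Hq ml wbFl.
  exists ([set v; b] |: (FL :\ [set w; b])), ([set v; b] |: (Fl :\ [set w; b])); split.
  - by split => //; rewrite ?eL' ?el'.
  - rewrite /good in_setU; apply/orP; left; apply/inVofP; exists [set v; b] => //.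
    by rewrite !inE eqxx.
  - apply: pres => x xv xw xb f xf; apply: swap_local xf; exact: nin.
case/inVofP: vl => ev evFl vev.
case: (boolP (v \in Vof FL)) => vL; last first.
  move/negP: bad; case; rewrite /good in_setU in_setD vL /=; apply/orP; right.
  by apply/inVofP; exists ev.
case/inVofP: vL => fv fvFL vfv.
have evE := subsetP sFl _ evFl; have fvE := subsetP sFL _ fvFL.
case: (Hv _ evE vev) => eev; case: (Hv _ fvE vfv) => efv; subst ev fv.
- move/negP: bad; case; rewrite /good in_setU; apply/orP; left; apply/inVofP.
  by exists [set v; w]; rewrite // inE evFl fvFL.
- have [mL' eL'] := twin_swap sE vw wb Evb Ewb Hv Hw mL fvFL.
  exists ([set w; b] |: (FL :\ [set v; b])), Fl; split.
  + by split => //; rewrite eL'.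
  + rewrite /good in_setU in_setD; apply/orP; right; apply/andP; split; last first.
      by apply/inVofP; exists [set v; w].
    apply/negP => /inVofP [f]; rewrite !inE => /orP[/eqP ->|/andP[fvb fFL]] vf.
      by move: vf; rewrite !inE (negbTE vw) (negbTE vb).
    by move/negP: fvb; case; apply/eqP; apply: (muniq tFL fFL fvFL vf).
  + apply: pres => x xv xw xb f xf //; apply: swap_local xf; exact: nin.
- exfalso.
  have vbFL : [set v; b] \notin FL.
    apply/negP => vbFL; move/eqP: vwvb; apply; exact: (muniq tFL fvFL vbFL vfv vev).
  have vbM : [set v; b] \in M by apply: (subsetP cs); rewrite inE vbFL evFl.
  have vwFl : [set v; w] \notin Fl.
    apply/negP => vwFl; move/eqP: vwvb; apply; exact: (muniq tFl vwFl evFl vfv vev).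
  have [f [z [fM fFl zf]]] := aug _ Evw vwFl.
  have fE := M_E sM fM.
  case/set2_mem => ez; subst z.
    case: (Hv _ fE zf) => ef; subst f; first by move: (M_notFL sM fM); rewrite fvFL.
    by rewrite evFl in fFl.
  case: (Hw _ fE zf) => ef; subst f; first by move: (M_notFL sM fM); rewrite fvFL.
  by move/eqP: vbwb; apply; apply: (muniq tM vbM fM (in2 _ _) (in2 _ _)).
- move/negP: bad; case; rewrite /good in_setU; apply/orP; left; apply/inVofP.
  by exists [set v; b]; rewrite // inE evFl fvFL.
Qed.

End P4.

Section P5.
Variables (T : finType) (E : {set {set T}}) (ch : {set T} -> T).
Hypotheses (sE : simple_graph E) (vc : valid_choice E ch) (conn : connected E)
  (hL : Lnu E = 2 * lnu E).
Implicit Types (FL Fl F M : {set {set T}}).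

Lemma fix_step FL Fl v : opt E FL Fl -> v \in V1 E ch -> ~~ good FL Fl v ->
  exists FL' Fl', [/\ opt E FL' Fl', good FL' Fl' v &
    forall x, x \in V1 E ch -> good FL Fl x -> good FL' Fl' x].
Proof.
move=> o vV bad; move: (vV); rewrite in_setU in_set => /orP[/eqP d1|/imsetP[t tT ev]].
  exact: (leaf_fix sE vc hL o d1 bad).
subst v; exact: (tri_fix sE vc conn hL o tT bad).
Qed.

Lemma part2 : exists Fl FL : {set {set T}},
  [/\ max_matching E Fl, nu (E :\: Fl) = lnu E,
      max_matching E FL, nu (E :\: FL) = Lnu E &
      V1 E ch \subset Vof (FL :&: Fl) :|: (Vof Fl :\: Vof FL)].
Proof.
have [FL0 [Fl0 o0]] := opt_exists E.
suff H : forall n FL Fl, opt E FL Fl ->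
    #|[set x in V1 E ch | ~~ good FL Fl x]| <= n ->
    exists Fl FL : {set {set T}},
  [/\ max_matching E Fl, nu (E :\: Fl) = lnu E,
      max_matching E FL, nu (E :\: FL) = Lnu E &
      V1 E ch \subset Vof (FL :&: Fl) :|: (Vof Fl :\: Vof FL)].
  exact: (H _ FL0 Fl0 o0 (leqnn _)).
elim=> [|n IH] FL Fl o hn;
  case: (boolP ([set x in V1 E ch | ~~ good FL Fl x] == set0)) => [/eqP e0|].
- case: o => mL eL ml el; exists Fl, FL; split => //.
  apply/subsetP => x xV; apply/negPn/negP => nx.
  have : x \in [set x in V1 E ch | ~~ good FL Fl x] by rewrite inE xV.
  by rewrite e0 inE.
- by rewrite -card_gt0 lt0n; move: hn; rewrite leqn0 => ->.
- case: o => mL eL ml el; exists Fl, FL; split => //.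
  apply/subsetP => x xV; apply/negPn/negP => nx.
  have : x \in [set x in V1 E ch | ~~ good FL Fl x] by rewrite inE xV.
  by rewrite e0 inE.
- case/set0Pn => v; rewrite inE => /andP[vV bad].
  have [FL' [Fl' [o' gv pr]]] := fix_step o vV bad.
  apply: (IH FL' Fl' o').
  have : [set x in V1 E ch | ~~ good FL' Fl' x] \proper [set x in V1 E ch | ~~ good FL Fl x].
    apply/properP; split.
      apply/subsetP => x; rewrite in_set => /andP[xV nx]; rewrite in_set xV /=.
      by apply/negP => gx; move/negP: nx; apply; apply: pr.
    by exists v; rewrite in_set ?vV ?bad ?gv.
  by move/proper_card => lt; rewrite -ltnS; apply: leq_trans lt hn.
Qed.

End P5.

Theorem claim5 (T : finType) (E : {set {set T}}) (ch : {set T} -> T) :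
  simple_graph E -> connected E -> 3 <= #|T| ->
  Lnu E = 2 * lnu E ->
  valid_choice E ch ->
  (forall FL Fl : {set {set T}},
      max_matching E FL -> nu (E :\: FL) = Lnu E ->
      max_matching E Fl -> nu (E :\: Fl) = lnu E ->
      (Vof FL :\: Vof Fl) :&: V1 E ch = set0) /\
  (exists Fl FL : {set {set T}},
      [/\ max_matching E Fl, nu (E :\: Fl) = lnu E,
          max_matching E FL, nu (E :\: FL) = Lnu E &
          V1 E ch \subset Vof (FL :&: Fl) :|: (Vof Fl :\: Vof FL)]).
Proof.
move=> sE conn _ hL vc; split; last exact: (part2 sE vc conn hL).
move=> FL Fl mL eL ml el; apply/setP => x; rewrite in_setI in_setD in_set0.
apply/negP => /andP[/andP[xl xL] xV].
by apply: (part1 sE vc mL ml _ xV xL xl); rewrite eL el.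
Qed.
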